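(* Let $k$ be a field of characteristic zero and let $P=\langle f_1,\ldots,f_m\rangle\subseteq k[x_1,\ldots,x_n]$ be a prime ideal. Let $V=\mathcal{V}(P)$ be the corresponding affine variety, of dimension $d$. Let $\mathcal{J}(P)=\left(\partial f_i/\partial x_j\right)_{1\le i\le m,\,1\le j\le n}$ be the Jacobian matrix. Assume that $\mathcal{J}(P)$ represents the dual of the algebraic matroid $\mathcal{M}(P)$, where the column matroid is taken over $\operatorname{Frac}(k[x_1,\ldots,x_n]/P)$ and the ground set is $E=\{1,\ldots,n\}$. Then the non-matroidal locus $\mathcal{NM}(P)$ is the set of points of $V$ at which the ideal \[ I=\bigcap_{B\in\mathcal{B}(\mathcal{M}(P))} I_{n-d}\big(\mathcal{J}(P)\{E\setminus B\}\big) \] vanishes; that is, $\mathcal{NM}(P)=\mathcal{V}(P)\cap\mathcal{V}(I)$. Equivalently, $I$ may be replaced by the intersection of $I_{n-d}(\mathcal{J}(P)\{S\})$ over all subsets $S\subseteq E$ with $I_{n-d}(\mathcal{J}(P)\{S\})\not\subseteq P$. In the special case where $\mathcal{J}(P)$ has exactly $n-d$ rows, this ideal is principal and is generated by the least common multiple of all maximal minors of $\mathcal{J}(P)$ that are nonzero modulo $P$.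
   Context: For a prime ideal $P\subseteq k[x_1,\ldots,x_n]$, let $K=\operatorname{Frac}(k[x_1,\ldots,x_n]/P)$ and let $\overline{x_i}$ be the image of $x_i$ in $K$. The algebraic matroid $\mathcal{M}(P)$ has ground set $\{\overline{x_1},\ldots,\overline{x_n}\}$, identified with $E=\{1,\ldots,n\}$. A subset of the ground set is independent if and only if it is algebraically independent over $k$. The matroid $\mathcal{M}(P)$ has rank $d=\dim \mathcal{V}(P)$, and $\mathcal{B}(\mathcal{M}(P))$ denotes its set of bases. For a matrix $M$, $I_r(M)$ is the ideal generated by the $r\times r$ minors of $M$; by convention this ideal is $0$ if $M$ has fewer than $r$ columns. For $S\subseteq E$, $M\{S\}$ is the submatrix of $M$ consisting of the columns indexed by $S$. The non-matroidal locus $\mathcal{NM}(P)$ is the set of points $p\in\mathcal{V}(P)$ at which the specialized matrix $\mathcal{J}(P)(p)$ does not represent the dual of $\mathcal{M}(P)$. Here $\mathcal{J}(P)(p)$ has entries in $k$ and its column matroid is taken over $k$. *)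

(* Defs.v *)
From HB Require Import structures.
From mathcomp Require Import all_boot all_order all_algebra.
From mathcomp Require Import ring_quotient generic_quotient fraction.
From mathcomp Require Import mpoly.
From Stdlib Require Import ClassicalEpsilon.

Set Implicit Arguments.
Unset Strict Implicit.
Unset Printing Implicit Defensive.

Import GRing.Theory.
Local Open Scope ring_scope.
Local Open Scope quotient_scope.

Section QuotIdomain.
Variables (R : comNzRingType) (P : prime_idealr R).

Definition quotP := {ideal_quot P}.
HB.instance Definition _ := GRing.ComNzRing.on quotP.

Definition quot_unit : {pred quotP} :=
  fun x => if excluded_middle_informative (exists y : quotP, y * x = 1)
           then true else false.

Definition quot_inv (x : quotP) : quotP :=
  match excluded_middle_informative (exists y : quotP, y * x = 1) with
  | left h => proj1_sig (constructive_indefinite_description _ h)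
  | right _ => x
  end.

Lemma quot_mulVx : {in quot_unit, left_inverse 1 quot_inv *%R}.
Proof.
move=> x; rewrite /quot_unit /quot_inv /in_mem /=.
case: excluded_middle_informative => // h _.
by case: constructive_indefinite_description.
Qed.

Lemma quot_unitPl : forall x y : quotP, y * x = 1 -> quot_unit x.
Proof.
move=> x y hxy; rewrite /quot_unit.
by case: excluded_middle_informative => // -[]; exists y.
Qed.

Lemma quot_invr_out : {in [predC quot_unit], quot_inv =1 id}.
Proof.
move=> x; rewrite /in_mem /= /quot_unit /quot_inv.
by case: excluded_middle_informative.
Qed.

HB.instance Definition _ := GRing.ComNzRing_hasMulInverse.Build quotP
  quot_mulVx quot_unitPl quot_invr_out.

HB.instance Definition _ :=
  GRing.ComUnitRing_isIntegral.Build quotP (@Quotient.rquot_IdomainAxiom R P).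

Definition fracQ : fieldType := {fraction quotP}.

Definition toFrac (g : R) : fracQ := @FracField.tofrac quotP (\pi_(quotP) g).

End QuotIdomain.

(* strictly increasing maps 'I_r -> 'I_m (choice of r rows / columns) *)
Definition increasing (r m : nat) (f : {ffun 'I_r -> 'I_m}) : bool :=
  [forall i : 'I_r, forall j : 'I_r, (i < j)%N ==> (f i < f j)%N].

Definition minor (R : comNzRingType) (m c r : nat) (A : 'M[R]_(m, c))
  (f : {ffun 'I_r -> 'I_m}) (g : {ffun 'I_r -> 'I_c}) : R :=
  \det (\matrix_(i < r, j < r) A (f i) (g j)).

(* I_r(A): the ideal generated by the r x r minors of A (it is 0 when A
   has fewer than r columns or rows, since there are then no minors). *)
Definition minor_ideal (R : comNzRingType) (m c r : nat) (A : 'M[R]_(m, c))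
  (h : R) : Prop :=
  exists coef : {ffun 'I_r -> 'I_m} -> {ffun 'I_r -> 'I_c} -> R,
    h = \sum_(f | increasing f) \sum_(g | increasing g) coef f g * minor A f g.

Definition colsubset (R : Type) (m n : nat) (A : 'M[R]_(m, n))
  (S : {set 'I_n}) : 'M[R]_(m, #|S|) :=
  \matrix_(i < m, j < #|S|) A i (enum_val j).

Definition gen_ideal (R : comNzRingType) (m : nat) (F : 'I_m -> R) (h : R)
  : Prop := exists c : 'I_m -> R, h = \sum_(i < m) c i * F i.

Definition rdvd (R : comNzRingType) (a b : R) : Prop := exists q, b = q * a.

Definition is_basis (n : nat) (indep : {set 'I_n} -> Prop) (B : {set 'I_n})
  : Prop := indep B /\ forall T : {set 'I_n}, B \proper T -> ~ indep T.

Definition dual_indep (n : nat) (indep : {set 'I_n} -> Prop) (S : {set 'I_n})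
  : Prop := exists B, is_basis indep B /\ S \subset ~: B.

Definition col_indep (F : fieldType) (m n : nat) (A : 'M[F]_(m, n))
  (S : {set 'I_n}) : Prop := \rank (colsubset A S) = #|S|.

Definition represents (F : fieldType) (m n : nat) (A : 'M[F]_(m, n))
  (indep : {set 'I_n} -> Prop) : Prop :=
  forall S, col_indep A S <-> indep S.

Section Poly.
Variables (k : fieldType) (n : nat).

Definition vanishes (S : {mpoly k[n]} -> Prop) (p : 'I_n -> k) : Prop :=
  forall g, S g -> g.@[p] = 0.

Definition jacobian (m : nat) (f : 'I_m -> {mpoly k[n]})
  : 'M[{mpoly k[n]}]_(m, n) :=
  \matrix_(i < m, j < n) mderiv j (f i).

Definition eval_mx (m c : nat) (A : 'M[{mpoly k[n]}]_(m, c)) (p : 'I_n -> k)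
  : 'M[k]_(m, c) := \matrix_(i, j) (A i j).@[p].

Variable P : prime_idealr {mpoly k[n]}.

Definition frac_mx (m c : nat) (A : 'M[{mpoly k[n]}]_(m, c))
  : 'M[fracQ P]_(m, c) := \matrix_(i, j) toFrac P (A i j).

Definition xbar (i : 'I_n) : fracQ P := toFrac P 'X_i.

Definition vars_in (g : {mpoly k[n]}) (S : {set 'I_n}) : Prop :=
  forall mo, mo \in msupp g -> forall i, (mo i != 0)%N -> i \in S.

Definition alg_indep (S : {set 'I_n}) : Prop :=
  forall g : {mpoly k[n]}, vars_in g S -> g != 0 ->
    mmap (fun c : k => toFrac P c%:MP) xbar g != 0.

End Poly.

Definition maxminor (R : comNzRingType) (m c : nat) (A : 'M[R]_(m, c))
  (g : {ffun 'I_m -> 'I_c}) : R :=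
  \det (\matrix_(i < m, j < m) A i (g j)).

(* Main.v *)
Require Import Defs.
From HB Require Import structures.
From mathcomp Require Import all_boot all_order all_algebra.
From mathcomp Require Import ring_quotient generic_quotient fraction.
From mathcomp Require Import mpoly.
From Stdlib Require Import ClassicalEpsilon.
From mathcomp Require Import ring zify.
Import GRing.Theory.
Local Open Scope ring_scope.
Set Implicit Arguments.
Unset Strict Implicit.
Unset Printing Implicit Defensive.

Section Divis.
Variable R : idomainType.
Implicit Types a b c p q u v w x : R.

Definition primer p := p != 0 /\ p \isn't a GRing.unit /\
  forall a b, rdvd p (a * b) -> rdvd p a \/ rdvd p b.

Definition factorization (a : R) :=
  exists u (s : seq R), u \is a GRing.unit /\ (forall q, q \in s -> primer q) /\
    a = u * \prod_(q <- s) q.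

Definition factorial := forall a : R, a != 0 -> factorization a.

Lemma rdvd_refl a : rdvd a a. Proof. by exists 1; rewrite mul1r. Qed.
Lemma rdvd_trans a b c : rdvd a b -> rdvd b c -> rdvd a c.
Proof. by move=> [x ->] [y ->]; exists (y * x); rewrite mulrA. Qed.
Lemma rdvd_mull a b c : rdvd a b -> rdvd a (c * b).
Proof. by move=> [x ->]; exists (c * x); rewrite mulrA. Qed.
Lemma rdvd_mulr a b c : rdvd a b -> rdvd a (b * c).
Proof. by move=> h; rewrite mulrC; apply: rdvd_mull. Qed.
Lemma rdvd_mul2 a b c : rdvd a b -> rdvd (c * a) (c * b).
Proof. by move=> [x ->]; exists x; rewrite mulrCA. Qed.
Lemma rdvd0 a : rdvd a 0. Proof. by exists 0; rewrite mul0r. Qed.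
Lemma rdvd1 a : rdvd 1 a. Proof. by exists a; rewrite mulr1. Qed.
Lemma rdvdD a b c : rdvd a b -> rdvd a c -> rdvd a (b + c).
Proof. by move=> [x ->] [y ->]; exists (x + y); rewrite mulrDl. Qed.
Lemma rdvdN a b : rdvd a b -> rdvd a (- b).
Proof. by move=> [x ->]; exists (- x); rewrite mulNr. Qed.
Lemma rdvd_unit u a : u \is a GRing.unit -> rdvd u a.
Proof. by move=> hu; exists (a * u^-1); rewrite mulrVK. Qed.
Lemma rdvd_sum (I : Type) (r : seq I) (P : pred I) (F : I -> R) a :
  (forall i, P i -> rdvd a (F i)) -> rdvd a (\sum_(i <- r | P i) F i).
Proof.
move=> h; elim/big_rec: _ => [|i x Pi hx]; first exact: rdvd0.
exact: rdvdD (h _ Pi) hx.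
Qed.
Lemma rdvd_cancel c a b : c != 0 -> rdvd (c * a) (c * b) -> rdvd a b.
Proof.
move=> c0 [x]; rewrite mulrCA => /(mulfI c0) ->; by exists x.
Qed.
Lemma rdvd_unit_inv u : rdvd u 1 -> u \is a GRing.unit.
Proof. by move=> [x /esym hx]; apply/unitrP; exists x; rewrite hx mulrC hx. Qed.

Lemma prime_irr p q w : primer q -> p \isn't a GRing.unit -> q = w * p ->
  w \is a GRing.unit.
Proof.
move=> [q0 [qu qp]] pu qe.
have : rdvd q (w * p) by rewrite -qe; exists 1; rewrite mul1r.
case/qp => -[z ze].
  have : 1 * q = (z * p) * q by rewrite mul1r {1}qe ze mulrAC.
  move/(mulIf q0) => h; case/negP: pu; apply/unitrP; exists z.
  by split; [rewrite -h | rewrite mulrC -h].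
have : 1 * q = (w * z) * q by rewrite mul1r {1}qe ze mulrA.
move/(mulIf q0) => h; apply/unitrP; exists z; by split; [rewrite mulrC -h | rewrite -h].
Qed.

Lemma prime_coprime_dvd p b x : primer p -> factorization b -> ~ rdvd p b ->
  rdvd b (p * x) -> rdvd b x.
Proof.
move=> hp [v [t [vu [tp ->]]]]; elim: t x tp => [|q t IH] x tp.
  by rewrite big_nil mulr1 => _ _; apply: rdvd_unit.
rewrite big_cons => npb hb.
have qt : primer q by apply: tp; rewrite mem_head.
have hq : rdvd q (p * x).
  apply: rdvd_trans hb; exists (v * \prod_(j <- t) j); ring.
case: (qt) => q0 [qu qp].
case: (qp _ _ hq) => [[w pe]|[x' xe]].
  have wu : w \is a GRing.unit by apply: prime_irr hp _ pe.
  case: npb; exists (w^-1 * v * \prod_(j <- t) j).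
  rewrite pe; transitivity ((w^-1 * w) * (v * (q * \prod_(j <- t) j))).
    by rewrite mulVr // mul1r.
  ring.
have H1 : rdvd (v * \prod_(j <- t) j) (p * x').
  apply: (@rdvd_cancel q); first by [].
  move: hb; rewrite xe.
  have -> : p * (x' * q) = q * (p * x') by ring.
  by have -> : v * (q * \prod_(j <- t) j) = q * (v * \prod_(j <- t) j) by ring.
have H2 : rdvd (v * \prod_(j <- t) j) x'.
  apply: IH H1.
  - by move=> j jt; apply: tp; rewrite inE jt orbT.
  - move=> h; apply: npb.
    have -> : v * (q * \prod_(j <- t) j) = q * (v * \prod_(j <- t) j) by ring.
    by apply: rdvd_mull.
rewrite xe; have -> : v * (q * \prod_(j <- t) j) = q * (v * \prod_(j <- t) j) by ring.
by rewrite [x' * q]mulrC; apply: rdvd_mul2.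
Qed.

Definition is_lcm_seq (s : seq R) h :=
  (forall a, a \in s -> rdvd a h) /\
  (forall q, (forall a, a \in s -> rdvd a q) -> rdvd h q).

Lemma lcm2 : factorial -> forall a b, a != 0 -> b != 0 ->
  exists h, h != 0 /\ rdvd a h /\ rdvd b h /\
     forall q, rdvd a q -> rdvd b q -> rdvd h q.
Proof.
move=> hf a b a0; case: (hf a a0) => u [s [uu [sp ->]]].
elim: s b sp {a0} => [|p s IH] b sp b0.
  exists b; split => //; split; first by rewrite big_nil mulr1; apply: rdvd_unit.
  by split; [apply: rdvd_refl|].
have pp : primer p by apply: sp; rewrite mem_head.
have sp' : forall q, q \in s -> primer q by move=> q qs; apply: sp; rewrite inE qs orbT.
have ae : u * \prod_(q <- p :: s) q = p * (u * \prod_(q <- s) q).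
  by rewrite big_cons mulrCA.
case: (pp) => p0 [pu ppr].
have [[b' be]|npb] := classic (rdvd p b).
  have b'0 : b' != 0 by move: b0; rewrite be; apply: contraNneq => ->; rewrite mul0r.
  case: (IH b' sp' b'0) => h [h0 [ha [hb hq]]].
  exists (p * h); split; first by rewrite mulf_neq0.
  rewrite ae; split; first by apply: rdvd_mul2.
  split; first by rewrite be mulrC; apply: rdvd_mul2.
  move=> q aq bq.
  have [q' qe] : rdvd p q by apply: rdvd_trans aq; exists (u * \prod_(j <- s) j); rewrite mulrC.
  rewrite qe [q' * p]mulrC; apply: rdvd_mul2; apply: hq.
    by apply: (@rdvd_cancel p) => //; rewrite [p * q']mulrC -qe.
  by apply: (@rdvd_cancel p) => //; rewrite [p * q']mulrC -qe [p * b']mulrC -be.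
case: (IH b sp' b0) => h [h0 [ha [hb hq]]].
exists (p * h); split; first by rewrite mulf_neq0.
rewrite ae; split; first by apply: rdvd_mul2.
split; first by apply: rdvd_mull.
move=> q aq bq.
have [q' qe] : rdvd p q by apply: rdvd_trans aq; exists (u * \prod_(j <- s) j); rewrite mulrC.
rewrite qe [q' * p]mulrC; apply: rdvd_mul2; apply: hq.
  by apply: (@rdvd_cancel p) => //; rewrite [p * q']mulrC -qe.
apply: (prime_coprime_dvd pp (hf b b0) npb).
by rewrite [p * q']mulrC -qe.
Qed.

Lemma lcm_seq : factorial -> forall s : seq R, (forall a, a \in s -> a != 0) ->
  exists h, h != 0 /\ is_lcm_seq s h.
Proof.
move=> hf; elim => [|a s IH] hs.
  by exists 1; split; [apply: oner_neq0|split => // q _; apply: rdvd1].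
case: IH => [b bs|h [h0 [hs1 hs2]]]; first by apply: hs; rewrite inE bs orbT.
case: (lcm2 hf (hs a (mem_head _ _)) h0) => g [g0 [ag [hg gq]]].
exists g; split => //; split.
  move=> b; rewrite inE => /orP[/eqP ->//|bs].
  exact: rdvd_trans (hs1 _ bs) hg.
move=> q hq; apply: gq; first by apply: hq; rewrite mem_head.
by apply: hs2 => b bs; apply: hq; rewrite inE bs orbT.
Qed.

End Divis.

Local Open Scope quotient_scope.

Definition pb (P : Prop) : bool := if excluded_middle_informative P then true else false.
Lemma pbP (P : Prop) : reflect P (pb P).
Proof. by rewrite /pb; case: excluded_middle_informative => h; constructor. Qed.

Lemma frac_repr (R : idomainType) (x : {fraction R}) :
  exists a b, b != 0 /\ x * tofrac b = tofrac a.
Proof.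
elim/quotW: x => r.
exists \n_r, \d_r; split; first exact: denom_ratioP.
unlock tofrac. rewrite !piE.
apply/eqmodP => /=.
rewrite FracField.equivfE /FracField.mulf /= !numden_Ratio ?oner_neq0 ?mulf_neq0 //.
  by rewrite mulr1 mulr1 mulrC.
all: by rewrite ?oner_neq0 ?denom_ratioP.
Qed.

Section Divis2.
Variable R : idomainType.
Implicit Types a b c p q u v w x : R.

Lemma unit_neq0 u : u \is a GRing.unit -> u != 0.
Proof. by move=> uu; apply: contraTneq uu => ->; rewrite unitr0. Qed.

Lemma prime_dvd_prod p v (t : seq R) : primer p -> v \is a GRing.unit ->
  (forall q, q \in t -> primer q) -> rdvd p (v * \prod_(q <- t) q) ->
  exists v' t', v' \is a GRing.unit /\ (forall q, q \in t' -> primer q) /\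
    size t = (size t').+1 /\ v * \prod_(q <- t) q = p * (v' * \prod_(q <- t') q).
Proof.
move=> pp; case: (pp) => p0 [pu ppr].
elim: t v => [|q t IH] v vu tp.
  rewrite big_nil mulr1 => hd; case/negP: pu.
  case: hd => x xe; apply: rdvd_unit_inv; exists (x / v).
  by rewrite mulrAC -xe mulrV.
have qp : primer q by apply: tp; rewrite mem_head.
have tp' : forall q, q \in t -> primer q by move=> j jt; apply: tp; rewrite inE jt orbT.
rewrite big_cons.
have -> : v * (q * \prod_(j <- t) j) = q * (v * \prod_(j <- t) j) by ring.
case/ppr => [[w qe]|hd].
  have wu : w \is a GRing.unit.
    by apply: (@prime_irr _ p q w qp pu qe).
  exists (v * w), t; split; first by rewrite unitrM vu wu.
  split => //; split => //; rewrite qe; ring.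
case: (IH v vu tp' hd) => v' [t' [v'u [t'p [st e]]]].
exists v', (q :: t'); split => //; split.
  by move=> j; rewrite inE => /orP[/eqP ->|/t'p].
split; first by rewrite /= st.
rewrite e big_cons; ring.
Qed.

End Divis2.

Section PolyFact.
Variable R : idomainType.
Implicit Types a b c p q u v w x : R.
Local Notation K := {fraction R}.
Local Notation tf := (@tofrac R).

Definition mapK (P : {poly R}) : {poly K} := map_poly tf P.

Lemma tf_inj : injective tf.
Proof. by move=> x y /eqP; rewrite tofrac_eq => /eqP. Qed.

Lemma mapK_inj : injective mapK.
Proof. apply: map_inj_poly; [exact: tf_inj | exact: rmorph0]. Qed.

Lemma size_mapK P : size (mapK P) = size P.
Proof. apply: size_map_inj_poly; [exact: tf_inj | exact: rmorph0]. Qed.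

Lemma mapKM P Q : mapK (P * Q) = mapK P * mapK Q.
Proof. exact: rmorphM. Qed.
Lemma mapKD P Q : mapK (P + Q) = mapK P + mapK Q.
Proof. exact: rmorphD. Qed.
Lemma mapKC c : mapK c%:P = (tf c)%:P.
Proof. exact: map_polyC. Qed.
Lemma mapKX : mapK 'X = 'X.
Proof. exact: map_polyX. Qed.

Lemma clear_denom (P : {poly K}) : exists r Q, r != 0 /\ mapK Q = (tf r)%:P * P.
Proof.
elim/poly_ind: P => [|p c [r1 [Q1 [r10 e1]]]].
  by exists 1, 0; split; [apply: oner_neq0|rewrite mulr0 /mapK map_poly0].
case: (frac_repr c) => a [b [b0 ca]].
exists (r1 * b), (b%:P * Q1 * 'X + (r1 * a)%:P); split; first by rewrite mulf_neq0.
rewrite mapKD !mapKM mapKC mapKX e1 mapKC !rmorphM /= -ca !polyCM; ring.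
Qed.

Lemma rdvdC_coef p (P : {poly R}) : rdvd p%:P P <-> forall i, rdvd p P`_i.
Proof.
split.
  by move=> [q ->] i; exists q`_i; rewrite coefMC.
move=> h.
pose qi i := proj1_sig (constructive_indefinite_description _ (h i)).
have qiP i : P`_i = qi i * p by rewrite /qi; case: constructive_indefinite_description.
exists (\poly_(i < size P) qi i); apply/polyP => i.
rewrite coefMC coef_poly; case: ltnP => [_|hi]; first exact: qiP.
by rewrite mul0r nth_default.
Qed.

Lemma primeC p : primer p -> primer (p%:P : {poly R}).
Proof.
move=> pp; case: (pp) => p0 [pu ppr].
split; first by rewrite polyC_eq0.
split.
  by rewrite poly_unitE size_polyC p0 coefC eqxx /=.
move=> g h hgh.
apply/Decidable.not_not_iff.
  by apply: classic.
move=> hn.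
have ng : ~ rdvd p%:P g by move=> hg; apply: hn; left.
have nh : ~ rdvd p%:P h by move=> hh; apply: hn; right.
have exg : exists i, pb (~ rdvd p g`_i).
  apply: NNPP => hh; apply: ng; apply/rdvdC_coef => i.
  apply: NNPP => hi; apply: hh; exists i; exact/pbP.
have exh : exists i, pb (~ rdvd p h`_i).
  apply: NNPP => hh; apply: nh; apply/rdvdC_coef => i.
  apply: NNPP => hi; apply: hh; exists i; exact/pbP.
case: (ex_minnP exg) => i /pbP gi gmin.
case: (ex_minnP exh) => j /pbP hj hmin.
have lg k : (k < i)%N -> rdvd p g`_k.
  by move=> ki; apply: NNPP => hk; move: (gmin k (introT (pbP _) hk)); rewrite leqNgt ki.
have lh k : (k < j)%N -> rdvd p h`_k.
  by move=> ki; apply: NNPP => hk; move: (hmin k (introT (pbP _) hk)); rewrite leqNgt ki.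
have := (proj1 (rdvdC_coef p (g * h)) hgh (i + j)%N).
rewrite coefM.
have ii : (i < (i + j).+1)%N by rewrite ltnS leq_addr.
rewrite (bigD1 (Ordinal ii)) //= addKn.
move=> hd.
have hr : rdvd p (\sum_(k < (i + j).+1 | k != Ordinal ii) g`_k * h`_(i + j - k)).
  apply: rdvd_sum => k kne.
  case: (ltngtP k i) => ki.
  - by apply: rdvd_mulr; apply: lg.
  - apply: rdvd_mull; apply: lh.
    by rewrite ltn_subLR ?ltn_add2r // -ltnS ltn_ord.
  - by case/eqP: kne; apply: val_inj.
have : rdvd p (g`_i * h`_j).
  have -> : g`_i * h`_j = (g`_i * h`_j + \sum_(k < (i + j).+1 | k != Ordinal ii) g`_k * h`_(i + j - k))
      - \sum_(k < (i + j).+1 | k != Ordinal ii) g`_k * h`_(i + j - k) by ring.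
  by apply: rdvdD => //; apply: rdvdN.
by case/ppr.
Qed.

Definition prim (f : {poly R}) := forall p, primer p -> ~ rdvd p%:P f.

Lemma polyC_unitV u : u \is a GRing.unit -> (u^-1)%:P * u%:P = 1 :> {poly R}.
Proof. by move=> uu; rewrite -polyCM mulVr. Qed.

Lemma prim_dvd (f h : {poly R}) a : factorial R -> prim f -> a != 0 ->
  rdvd f (a%:P * h) -> rdvd f h.
Proof.
move=> hf pf a0; case: (hf a a0) => u [s [uu [sp ->]]].
elim: s u uu sp h => [|p s IH] u uu sp h.
  rewrite big_nil mulr1 => -[q qe]; exists ((u^-1)%:P * q).
  by rewrite -mulrA -qe mulrA polyC_unitV // mul1r.
have pp : primer p by apply: sp; rewrite mem_head.
have sp' : forall q, q \in s -> primer q by move=> j js; apply: sp; rewrite inE js orbT.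
move=> [q qe].
have : rdvd p%:P (q * f).
  rewrite -qe big_cons; exists ((u * \prod_(j <- s) j)%:P * h).
  rewrite !polyCM; ring.
case/(proj2 (proj2 (primeC pp))) => [[q' qe']|]; last by move/(pf _ pp).
apply: (IH u uu sp' h); exists q'.
have p0 : (p%:P : {poly R}) != 0 by rewrite polyC_eq0; case: pp.
apply: (mulIf p0).
have -> : (u * \prod_(j <- s) j)%:P * h * p%:P = (u * \prod_(j <- p :: s) j)%:P * h.
  rewrite big_cons !polyCM; ring.
rewrite qe qe'; ring.
Qed.

Lemma divide_out (f D E : {poly R}) a : factorial R -> a != 0 ->
  a%:P * f = D * E -> exists D' E', f = D' * E' /\ size D' = size D /\ size E' = size E.
Proof.
move=> hf a0; case: (hf a a0) => u [s [uu [sp ->]]].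
elim: s u uu sp D E => [|p s IH] u uu sp D E.
  rewrite big_nil mulr1 => e.
  exists ((u^-1)%:P * D), E; split.
    by rewrite -mulrA -e mulrA polyC_unitV // mul1r.
  split => //; rewrite size_Cmul //.
  have : u^-1 \is a GRing.unit by rewrite unitrV.
  by apply: contraTneq => ->; rewrite unitr0.
have pp : primer p by apply: sp; rewrite mem_head.
have sp' : forall q, q \in s -> primer q by move=> j js; apply: sp; rewrite inE js orbT.
have p0 : (p%:P : {poly R}) != 0 by rewrite polyC_eq0; case: pp.
have p0' : p != 0 by case: pp.
move=> e.
have : rdvd p%:P (D * E).
  rewrite -e big_cons; exists ((u * \prod_(j <- s) j)%:P * f).
  rewrite !polyCM; ring.
case/(proj2 (proj2 (primeC pp))) => [[D1 De]|[E1 Ee]].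
  have e' : (u * \prod_(j <- s) j)%:P * f = D1 * E.
    apply: (mulIf p0).
    have -> : (u * \prod_(j <- s) j)%:P * f * p%:P = (u * \prod_(j <- p :: s) j)%:P * f.
      rewrite big_cons !polyCM; ring.
    rewrite e De; ring.
  case: (IH u uu sp' D1 E e') => D' [E' [fe [s1 s2]]].
  exists D', E'; split => //; split => //.
  by rewrite s1 De mulrC size_Cmul.
have e' : (u * \prod_(j <- s) j)%:P * f = D * E1.
  apply: (mulIf p0).
  have -> : (u * \prod_(j <- s) j)%:P * f * p%:P = (u * \prod_(j <- p :: s) j)%:P * f.
    rewrite big_cons !polyCM; ring.
  rewrite e Ee; ring.
case: (IH u uu sp' D E1 e') => D' [E' [fe [s1 s2]]].
exists D', E'; split => //; split => //.
by rewrite s2 Ee mulrC size_Cmul.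
Qed.

Lemma prim_prime (f : {poly R}) : factorial R -> prim f -> (1 < size f)%N ->
  (forall g h, f = g * h -> (size g <= 1)%N \/ (size h <= 1)%N) -> primer f.
Proof.
move=> hf pf sf nf.
have f0 : f != 0 by rewrite -size_poly_gt0 ltnW.
split => //; split.
  by rewrite poly_unitE; apply/negP => /andP[/eqP s1 _]; move: sf; rewrite s1.
move=> g h [q qe].
pose fK := mapK f; pose gK := mapK g.
have fK0 : fK != 0 by rewrite -size_poly_eq0 size_mapK size_poly_eq0.
case: (boolP (coprimep fK gK)) => cop.
  right; case/Bezout_coprimepP: cop => [[u1 u2]] /= he.
  have /size_poly1P [c c0 ce] : size (u1 * fK + u2 * gK) == 1.
    by rewrite (eqp_size he) size_poly1.
  case: (clear_denom u1) => r1 [U1 [r10 e1]].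
  case: (clear_denom u2) => r2 [U2 [r20 e2]].
  pose E := r2%:P * U1 * f + r1%:P * U2 * g.
  have mE : mapK E = (tf (r1 * r2) * c)%:P.
    rewrite /E mapKD !mapKM !mapKC e1 e2 !rmorphM /= -ce /fK /gK; ring.
  have Es : (size E <= 1)%N by rewrite -size_mapK mE size_polyC leq_b1.
  have E0 : E`_0 != 0.
    apply/eqP => h0; move: mE; rewrite (size1_polyC Es) h0 mapKC rmorph0.
    move/polyC_inj/esym/eqP; rewrite mulf_eq0 tofrac_eq0 mulf_eq0.
    by rewrite (negbTE r10) (negbTE r20) (negbTE c0).
  apply: (prim_dvd hf pf E0); rewrite -(size1_polyC Es) /E.
  exists (r2%:P * U1 * h + r1%:P * U2 * q).
  have -> : (r2%:P * U1 * f + r1%:P * U2 * g) * h =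
            r2%:P * U1 * f * h + r1%:P * U2 * (g * h) by ring.
  rewrite qe; ring.
left; pose d := gcdp fK gK.
case/dvdpP: (dvdp_gcdl fK gK) => e fe.
have d0 : d != 0 by rewrite /d gcdp_eq0 negb_and fK0.
have e0 : e != 0 by apply: contraNneq fK0 => hd; rewrite fe hd mul0r.
have sd : (1 < size d)%N.
  move: cop; rewrite coprimep_def -/d; rewrite ltn_neqAle eq_sym => -> /=.
  by rewrite size_poly_gt0.
case: (leqP (size e) 1) => se.
  case/dvdpP: (dvdp_gcdr fK gK) => q' ge.
  have e00 : e`_0 != 0 by apply: contraNneq e0 => h0; rewrite (size1_polyC se) h0.
  case: (clear_denom (q' * ((e`_0)^-1)%:P)) => r [Q [r0 eQ]].
  have : mapK (r%:P * g) = mapK (Q * f).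
    rewrite mapKM mapKC mapKM eQ.
    have inv : ((e`_0)^-1)%:P * (e`_0)%:P = 1 :> {poly K} by rewrite -polyCM mulVf.
    have fe' : fK = (e`_0)%:P * d by rewrite {1}fe -(size1_polyC se).
    rewrite -/gK -/fK [in LHS]ge [in RHS]fe'.
    transitivity ((tf r)%:P * q' * (((e`_0)^-1)%:P * (e`_0)%:P) * d); last by ring.
    by rewrite inv mulr1 mulrA.
  move/mapK_inj => rg; apply: (prim_dvd hf pf r0); by exists Q.
exfalso.
case: (clear_denom d) => rd [D [rd0 eD]].
case: (clear_denom e) => re [E [re0 eE]].
have : D * E = (rd * re)%:P * f.
  apply: mapK_inj; rewrite !mapKM eD eE mapKC rmorphM /= -/fK [in RHS]fe -/d polyCM; ring.
move/esym/(divide_out hf (mulf_neq0 rd0 re0)) => [D' [E' [fe' [sD sE]]]].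
have tf0 x : x != 0 -> tf x != 0 by rewrite tofrac_eq0.
have sD' : size D = size d by rewrite -size_mapK eD size_Cmul ?tf0.
have sE' : size E = size e by rewrite -size_mapK eE size_Cmul ?tf0.
case: (nf D' E' fe'); rewrite ?sD ?sE ?sD' ?sE' leqNgt; [by rewrite sd | by rewrite se].
Qed.

Lemma factorial_poly : factorial R -> factorial {poly R}.
Proof.
move=> hf.
suff H : forall N (f : {poly R}), (size f <= N)%N -> f != 0 -> factorization f.
  by move=> f f0; apply: (H (size f)).
elim=> [|N IHN] f sf f0.
  by move: f0; rewrite -size_poly_eq0; move: sf; rewrite leqn0 => ->.
pose C k (f : {poly R}) := exists v (t : seq R), v \is a GRing.unit /\
   (forall q, q \in t -> primer q) /\ (size t <= k)%N /\ lead_coef f = v * \prod_(q <- t) q.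
have step : forall k, (forall f : {poly R}, (size f <= N.+1)%N -> f != 0 ->
     (exists v (t : seq R), v \is a GRing.unit /\ (forall q, q \in t -> primer q) /\
      (size t < k)%N /\ lead_coef f = v * \prod_(q <- t) q) -> factorization f) ->
    forall f : {poly R}, (size f <= N.+1)%N -> f != 0 -> C k f -> factorization f.
  move=> k IHk {}f {}sf {}f0 [v [t [vu [tp [st te]]]]].
  case: (leqP (size f) 1) => sf1.
    have c0 : f`_0 != 0 by apply: contraNneq f0 => h0; rewrite (size1_polyC sf1) h0.
    case: (hf _ c0) => u [s [uu [sp se]]].
    exists u%:P, (map polyC s); split.
      by rewrite poly_unitE size_polyC coefC /= (unit_neq0 uu) uu.
    split.
      by move=> q /mapP [q0 q0s ->]; apply: primeC; apply: sp.
    by rewrite (size1_polyC sf1) se polyCM big_map rmorph_prod.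
  have [[p [pp [f' fe]]]|np] := classic (exists p, primer p /\ rdvd p%:P f).
    have p0 : p != 0 by case: pp.
    have f'0 : f' != 0 by apply: contraNneq f0; rewrite fe => ->; rewrite mul0r.
    have sf' : size f' = size f by rewrite fe mulrC size_Cmul.
    have lf : lead_coef f = p * lead_coef f'.
      by rewrite fe lead_coefM lead_coefC mulrC.
    have hd : rdvd p (v * \prod_(q <- t) q) by rewrite -te lf; exists (lead_coef f'); rewrite mulrC.
    case: (prime_dvd_prod pp vu tp hd) => v' [t' [v'u [t'p [st' e']]]].
    have lf' : lead_coef f' = v' * \prod_(q <- t') q.
      by apply: (mulfI p0); rewrite -lf te e'.
    have ff' : factorization f'.
      apply: IHk; rewrite ?sf' //; exists v', t'; split => //; split => //; split => //.
      by move: st; rewrite st'.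
    case: ff' => u [s [uu [sp se]]].
    exists u, (p%:P :: s); split => //; split.
      by move=> q; rewrite inE => /orP[/eqP ->|/sp //]; apply: primeC.
    by rewrite fe se big_cons; ring.
  have pf : prim f by move=> p pp hd; apply: np; exists p.
  have [[g [h [fe [sg sh]]]]|nf] := classic (exists g h, f = g * h /\ (1 < size g)%N /\ (1 < size h)%N).
    have g0 : g != 0 by rewrite -size_poly_gt0 ltnW.
    have h0 : h != 0 by rewrite -size_poly_gt0 ltnW.
    have sfe : size f = (size g + size h).-1 by rewrite fe size_mul.
    have fg : factorization g.
      apply: IHN g0; rewrite -ltnS; apply: leq_trans sf; rewrite sfe.
      by move: sh; lia.
    have fh : factorization h.
      apply: IHN h0; rewrite -ltnS; apply: leq_trans sf; rewrite sfe.
      by move: sg; lia.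
    case: fg => u1 [s1 [u1u [s1p e1]]]; case: fh => u2 [s2 [u2u [s2p e2]]].
    exists (u1 * u2), (s1 ++ s2); split; first by rewrite unitrM u1u u2u.
    split; first by move=> q; rewrite mem_cat => /orP[/s1p|/s2p].
    by rewrite fe e1 e2 big_cat /=; ring.
  have nf' : forall g h, f = g * h -> (size g <= 1)%N \/ (size h <= 1)%N.
    move=> g h fe; case: (leqP (size g) 1) => sg; first by left.
    case: (leqP (size h) 1) => sh; first by right.
    by case: nf; exists g, h.
  exists 1, [:: f]; split; first exact: unitr1.
  split; first by move=> q; rewrite inE => /eqP ->; apply: prim_prime.
  by rewrite big_seq1 mul1r.
have lf0 : lead_coef f != 0 by rewrite lead_coef_eq0.
case: (hf _ lf0) => v [t [vu [tp te]]].
suff : forall k (g : {poly R}), (size g <= N.+1)%N -> g != 0 -> C k g -> factorization g.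
  by apply; rewrite // /C; exists v, t.
elim=> [|k IHk]; apply: step => g sg g0 [v' [t' [vu' [tp' [st' te']]]]] //.
by apply: IHk sg g0 _; exists v', t'.
Qed.

End PolyFact.

Local Close Scope quotient_scope.

Lemma factorial_transport (A B : idomainType) (phi : {rmorphism A -> B}) :
  injective phi -> (forall b, exists a, phi a = b) -> factorial B -> factorial A.
Proof.
move=> inj sur hf a a0.
have pa0 : phi a != 0 by apply: contra_neq a0 => h; apply: inj; rewrite h rmorph0.
case: (hf _ pa0) => u [s [uu [sp se]]].
pose pre b := proj1_sig (constructive_indefinite_description _ (sur b)).
have preP b : phi (pre b) = b by rewrite /pre; case: constructive_indefinite_description.
have unit_pre v : v \is a GRing.unit -> pre v \is a GRing.unit.
  move=> vu; apply/unitrP; exists (pre v^-1); split; apply: inj;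
    by rewrite rmorphM /= !preP rmorph1 ?mulVr ?mulrV.
have prime_pre q : primer q -> primer (pre q).
  move=> [q0 [qu qp]]; split.
    by apply: contra_neq q0 => h; rewrite -(preP q) h rmorph0.
  split.
    by apply: contra qu => h; rewrite -(preP q); apply: rmorph_unit.
  move=> x y [z ze].
  have : rdvd q (phi x * phi y) by exists (phi z); rewrite -rmorphM ze rmorphM preP.
  case/qp => -[w we]; [left|right]; exists (pre w); apply: inj;
    by rewrite rmorphM /= !preP.
exists (pre u), (map pre s); split; first exact: unit_pre.
split; first by move=> q /mapP [q' q's ->]; apply: prime_pre; apply: sp.
apply: inj; rewrite rmorphM rmorph_prod /= preP big_map se.
by congr (_ * _); apply: eq_bigr => q _; rewrite preP.
Qed.

Local Notation widen := (widen_ord (leqnSn _)).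

Section Muni.
Variables (R : idomainType) (n : nat).

Definition rmnm (m : 'X_{1..n.+1}) : 'X_{1..n} := [multinom m (widen i) | i < n].

Lemma mnm_ext (m1 m2 : 'X_{1..n.+1}) : rmnm m1 = rmnm m2 -> m1 ord_max = m2 ord_max ->
  m1 = m2.
Proof.
move=> /mnmP hr hm; apply/mnmP => i.
case: (ltnP i n) => hi.
  have -> : i = widen (Ordinal hi) by apply: val_inj.
  by move: (hr (Ordinal hi)); rewrite /rmnm !mnmE.
have -> : i = ord_max by apply: val_inj => /=; apply/eqP; rewrite eqn_leq hi -ltnS ltn_ord.
exact: hm.
Qed.

Lemma muni_coef (p : {mpoly R[n.+1]}) (m : 'X_{1..n.+1}) :
  ((muni p)`_(m ord_max))@_(rmnm m) = p@_m.
Proof.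
rewrite muniE coef_sum raddf_sum /=.
under eq_bigr => m' _ do rewrite coefZ coefXn mulr_natr mcoeffMn mcoeffZ mcoeffX -/(rmnm m').
case: (boolP (m \in msupp p)) => mp.
  rewrite (bigD1_seq m) ?msupp_uniq //= !eqxx /= mulr1 mulr1n big1_seq ?addr0 //.
  move=> m' /andP[ne _]; case: eqP => e1; case: eqP => e2 //=; rewrite ?mulr0n ?mulr0 //.
  by case/eqP: ne; apply: mnm_ext; rewrite /rmnm.
rewrite big1_seq; first by apply/esym/eqP; move: mp; rewrite mcoeff_msupp negbK.
move=> m' /andP[_ m'p]; case: eqP => e1; case: eqP => e2 //=; rewrite ?mulr0n ?mulr0 //.
have : m' = m by apply: mnm_ext; rewrite /rmnm.
by move=> h; move: m'p mp; rewrite h => ->.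
Qed.

Lemma muni_inj : injective (@muni n R).
Proof.
move=> p q e; apply/mpolyP => m.
by rewrite -!muni_coef e.
Qed.

Lemma muniXm (m : 'X_{1..n}) : muni ('X_[mnmwiden m] : {mpoly R[n.+1]}) = ('X_[m])%:P.
Proof.
rewrite muniE msuppX big_seq1 mcoeffX eqxx scale1r mnmwiden_ordmax expr0.
have -> : [multinom mnmwiden m (widen i) | i < n] = m.
  by apply/mnmP => i; rewrite mnmE mnmwiden_widen.
by rewrite alg_polyC.
Qed.

Lemma muniXmax : muni ('X_ord_max : {mpoly R[n.+1]}) = 'X.
Proof.
rewrite muniE msuppX big_seq1 mcoeffX eqxx scale1r mnm1E eqxx expr1.
have -> : [multinom (U_(ord_max)%MM : 'X_{1..n.+1}) (widen i) | i < n] = 0%MM.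
  apply/mnmP => i; rewrite mnmE mnm1E mnm0E.
  by case: eqP => // /(congr1 val) /= h; move: (ltn_ord i); rewrite -h ltnn.
by rewrite mpolyX0 scale1r.
Qed.

Lemma muni_widen (c : {mpoly R[n]}) : muni (mwiden c) = c%:P.
Proof.
rewrite [in LHS](mpolyE c) (big_morph _ (@mwidenD _ _) (@mwiden0 _ _)).
rewrite (big_morph _ (@muniD _ _) (@muni0 _ _)).
rewrite [in RHS](mpolyE c) rmorph_sum.
apply: eq_bigr => m _; rewrite mwidenZ mwidenX muniZ muniXm.
by rewrite -mul_mpolyC -mul_polyC -polyCM mul_mpolyC.
Qed.

Lemma muni_sur (P : {poly {mpoly R[n]}}) : exists p, muni p = P.
Proof.
elim/poly_ind: P => [|P c [p pe]]; first by exists 0; rewrite raddf0.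
exists (p * 'X_ord_max + mwiden c).
by rewrite muniD muniM pe muniXmax muni_widen.
Qed.

End Muni.

Lemma factorial_mpoly (k : fieldType) (n : nat) : factorial {mpoly k[n]}.
Proof.
elim: n => [|n IH].
  move=> p p0.
  have pe : p = (p@_0%MM)%:MP.
    apply/mpolyP => m; rewrite mcoeffC.
    have -> : m = 0%MM by apply/mnmP => -[].
    by rewrite eqxx mulr1.
  have c0 : p@_0%MM != 0 by apply: contraNneq p0 => h; rewrite pe h mpolyC0.
  exists p, [::]; split; last by split => //; rewrite big_nil mulr1.
  rewrite {1}pe; move: c0; move: (p@_0%MM) => c c0.
  apply/unitrP; exists (c^-1)%:MP; rewrite -!mpolyCM.
  by rewrite mulVf // mulfV // mpolyC1.
apply: (@factorial_transport _ _ (@muni n k)).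
- exact: muni_inj.
- exact: muni_sur.
- exact: factorial_poly.
Qed.

Lemma enum_sorted c (S : {set 'I_c}) :
  sorted (fun x y : 'I_c => (x < y)%N) (enum S).
Proof.
have : sorted (fun x y : 'I_c => (x < y)%N) (enum 'I_c).
  by have := iota_ltn_sorted 0 c; rewrite -val_enum_ord sorted_map.
rewrite enumT /enum_mem => h; apply: sorted_filter => //.
by move=> x y z; apply: ltn_trans.
Qed.

Lemma enum_val_mono c (S : {set 'I_c}) (i j : 'I_#|S|) :
  (i < j)%N -> (enum_val i < enum_val j)%N.
Proof.
move=> ij; have x0 : 'I_c by apply: enum_val i.
rewrite !(enum_val_nth x0).
apply: (sorted_ltn_nth (fun x y z => @ltn_trans _ _ _) x0 (enum_sorted S)) => //;
 by rewrite inE -cardE ltn_ord.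
Qed.

Section FieldMx.
Variables (F : fieldType) (m c : nat) (A : 'M[F]_(m, c)).
Implicit Types S T : {set 'I_c}.

Definition RT (S : {set 'I_c}) : 'M[F]_(#|S|, m) := (colsubset A S)^T.
Definition ci (S : {set 'I_c}) : bool := \rank (colsubset A S) == #|S|.

Lemma ciP S : col_indep A S <-> ci S.
Proof. by rewrite /col_indep /ci; split => [->|/eqP]. Qed.

Lemma rank_RT S : \rank (RT S) = \rank (colsubset A S).
Proof. exact: mxrank_tr. Qed.

Lemma row_RT S i : row i (RT S) = row (enum_val i) A^T.
Proof. by apply/rowP => j; rewrite !mxE. Qed.

Lemma RT_sub S T : S \subset T -> (RT S <= RT T)%MS.
Proof.
move=> ST; apply/row_subP => i; rewrite row_RT.
have iT : enum_val i \in T by apply: (subsetP ST); apply: enum_valP.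
apply: (eq_row_sub (enum_rank_in iT (enum_val i))).
by rewrite row_RT enum_rankK_in.
Qed.

Lemma row_in_RT S j : j \in S -> (row j A^T <= RT S)%MS.
Proof.
move=> jS; apply: (eq_row_sub (enum_rank_in jS j)).
by rewrite row_RT enum_rankK_in.
Qed.

Lemma RT_subA S : (RT S <= A^T)%MS.
Proof. by apply/row_subP => i; rewrite row_RT row_sub. Qed.

Lemma rank_RTT : \rank (RT setT) = \rank A.
Proof.
rewrite -(mxrank_tr A); apply/eqP; rewrite eqn_leq mxrankS ?RT_subA //=.
apply: mxrankS; apply/row_subP => j; exact: row_in_RT (in_setT j).
Qed.

Lemma rank_RT_le S : (\rank (RT S) <= #|S|)%N.
Proof. exact: rank_leq_row. Qed.

Lemma rank_split S T : S \subset T ->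
  (\rank (RT T) <= \rank (RT S) + #|T :\: S|)%N.
Proof.
move=> ST.
have H : (RT T <= RT S + RT (T :\: S))%MS.
  apply/row_subP => i; rewrite row_RT.
  case: (boolP (enum_val i \in S)) => hS.
    by apply: submx_trans (addsmxSl _ _); apply: row_in_RT.
  apply: submx_trans (addsmxSr _ _); apply: row_in_RT.
  by rewrite inE hS enum_valP.
apply: leq_trans (mxrankS H) _.
apply: leq_trans (mxrank_adds_leqif _ _).1 _.
by rewrite leq_add2l rank_RT_le.
Qed.

Lemma ci_sub S T : S \subset T -> ci T -> ci S.
Proof.
move=> ST /eqP hT; rewrite /ci eqn_leq -rank_RT rank_RT_le /=.
have := rank_split ST; rewrite rank_RT hT cardsD.
have -> : T :&: S = S by apply/setIidPr.
move=> h; have hST : (#|S| <= #|T|)%N by apply: subset_leq_card.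
move: h hST; set a := #|T|; set b := #|S|; set x := \rank (RT S); lia.
Qed.

Lemma ci_max S T : T \subset S -> ci T ->
  (forall j, j \in S -> j \notin T -> ~~ ci (j |: T)) -> \rank (RT S) = #|T|.
Proof.
move=> TS /eqP hT hmax.
have H : (RT S <= RT T)%MS.
  apply/row_subP => i; rewrite row_RT.
  case: (boolP (enum_val i \in T)) => iT; first exact: row_in_RT.
  set j := enum_val i.
  have jS : j \in S by apply: enum_valP.
  have nci := hmax j jS iT.
  have sub : T \subset j |: T by apply: subsetUr.
  have h1 : (\rank (RT (j |: T)) <= #|T|)%N.
    have cU : #|j |: T| = (#|T|).+1 by rewrite cardsU1 iT.
    have r1 := rank_RT_le (j |: T).
    have r2 : \rank (RT (j |: T)) != #|j |: T| by rewrite rank_RT.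
    move: r1 r2; set z := \rank (RT (j |: T)); rewrite cU.
    by rewrite leq_eqVlt ltnS => /orP[->|].
  have h2 : (RT (j |: T) <= RT T)%MS.
    have := mxrank_leqif_sup (RT_sub sub); case => _ <-.
    by rewrite eqn_leq mxrankS ?RT_sub //= [\rank (RT T)]rank_RT hT h1.
  apply: submx_trans h2; apply: row_in_RT; exact: setU11.
apply/eqP; rewrite eqn_leq; apply/andP; split.
  by apply: leq_trans (mxrankS H) _; rewrite rank_RT hT.
by rewrite -hT -rank_RT mxrankS // RT_sub.
Qed.

Lemma ci_exists S k : (k <= \rank (RT S))%N ->
  exists T, [/\ T \subset S, ci T & #|T| = k].
Proof.
move=> hk.
pose Pr (T : {set 'I_c}) := [&& T \subset S, ci T & (#|T| <= k)%N].
have P0 : Pr set0.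
  have e0 x : (#|set0 : {set 'I_c}| <= x)%N by rewrite cards0.
  by rewrite /Pr sub0set /ci eqn_leq rank_leq_col !e0.
case: (arg_maxnP (fun T => #|T|) P0) => T /and3P [TS cT Tk] Tmax.
exists T; split => //; apply/eqP; rewrite eqn_leq Tk /=.
case: (leqP k #|T|) => // hlt.
have : \rank (RT S) = #|T|.
  apply: ci_max => // j jS jT; apply/negP => cj.
  have := Tmax (j |: T); rewrite /Pr cj /= cardsU1 jT /= add1n hlt.
  have -> : j |: T \subset S by rewrite subUset sub1set jS TS.
  by move/(_ isT); rewrite ltnn.
by move=> h; move: hk; rewrite h leqNgt hlt.
Qed.

Lemma minor_rank r (f : {ffun 'I_r -> 'I_m}) (g : {ffun 'I_r -> 'I_c}) :
  minor A f g != 0 -> (r <= \rank A)%N.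
Proof.
move=> h.
have -> : r = \rank (mxsub f g A).
  apply/esym/mxrank_unit; by rewrite unitmxE unitfE.
rewrite mxsubrc rowsubE.
apply: leq_trans (mxrankM_maxr _ _) _.
rewrite -mxrank_tr.
have -> : (colsub g A)^T = rowsub g A^T by apply/matrixP => i j; rewrite !mxE.
by rewrite rowsubE -(mxrank_tr A); apply: mxrankM_maxr.
Qed.

End FieldMx.

Lemma rank_exists_minor (F : fieldType) m c (A : 'M[F]_(m, c)) r :
  (r <= \rank A)%N -> exists (f : {ffun 'I_r -> 'I_m}) (g : {ffun 'I_r -> 'I_c}),
    [/\ increasing f, increasing g & minor A f g != 0].
Proof.
move=> hr.
case: (@ci_exists _ _ _ A setT r); first by rewrite rank_RTT.
move=> T [_ cT eT]; subst r.
pose B := (colsubset A T)^T.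
have rB : \rank (RT B setT) = #|T|.
  by rewrite rank_RTT mxrank_tr; apply/eqP.
case: (@ci_exists _ _ _ B setT #|T|); first by rewrite rB.
move=> Rw [_ cR eR].
pose f : {ffun 'I_#|T| -> 'I_m} := [ffun i => enum_val (cast_ord (esym eR) i)].
pose g : {ffun 'I_#|T| -> 'I_c} := [ffun j => enum_val j].
exists f, g; split.
- apply/forallP => i; apply/forallP => j; apply/implyP => ij.
  by rewrite !ffunE; apply: enum_val_mono.
- apply/forallP => i; apply/forallP => j; apply/implyP => ij.
  by rewrite !ffunE; apply: enum_val_mono.
rewrite /minor -unitfE -unitmxE -row_free_unit /row_free; apply/eqP.
pose Y := (colsubset B Rw)^T.
have -> : (\matrix_(i, j) A (f i) (g j)) = rowsub (cast_ord (esym eR)) Y.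
  by apply/matrixP => i j; rewrite !mxE !ffunE.
rewrite rowsub_cast (eqmx_cast _ _) mxrank_tr.
by move/eqP: cR => ->.
Qed.

Local Open Scope quotient_scope.

Section Morph.
Variables (k : fieldType) (n : nat) (P : prime_idealr {mpoly k[n]}).
Local Notation R := {mpoly k[n]}.

Lemma toFrac_eq0 (g : R) : (toFrac P g == 0) = (g \in P).
Proof.
rewrite /toFrac tofrac_eq0 -(rmorph0 (\pi_(Defs.quotP P))).
by rewrite -Quotient.idealrBE subr0.
Qed.

Lemma toFracM (x y : R) : toFrac P (x * y) = toFrac P x * toFrac P y.
Proof. by rewrite /toFrac !rmorphM. Qed.


Lemma minor_frac (c s r : nat) (A : 'M[R]_(c, s)) f g :
  minor (frac_mx P A) f g = toFrac P (@minor _ _ _ r A f g).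
Proof.
rewrite /minor /toFrac -!det_map_mx; congr (\det _).
by apply/matrixP => i j; rewrite !mxE.
Qed.

Lemma minor_eval (c s r : nat) (A : 'M[R]_(c, s)) (p : 'I_n -> k) f g :
  minor (eval_mx A p) f g = (@minor _ _ _ r A f g).@[p].
Proof.
rewrite /minor -det_map_mx; congr (\det _).
by apply/matrixP => i j; rewrite !mxE.
Qed.

Lemma colsubset_eval (c : nat) (A : 'M[R]_(c, n)) (p : 'I_n -> k) S :
  colsubset (eval_mx A p) S = eval_mx (colsubset A S) p.
Proof. by apply/matrixP => i j; rewrite !mxE. Qed.

Lemma colsubset_frac (c : nat) (A : 'M[R]_(c, n)) S :
  colsubset (frac_mx P A) S = frac_mx P (colsubset A S).
Proof. by apply/matrixP => i j; rewrite !mxE. Qed.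

End Morph.

Section MinorIdeal.
Variables (R : comNzRingType) (c s r : nat) (A : 'M[R]_(c, s)).

Lemma minor_ideal_mul g h : minor_ideal r A g -> minor_ideal r A (h * g).
Proof.
move=> [coef ->]; exists (fun f g => h * coef f g).
rewrite mulr_sumr; apply: eq_bigr => f _; rewrite mulr_sumr; apply: eq_bigr => g' _.
by rewrite mulrA.
Qed.

Lemma minor_ideal_gen (f : {ffun 'I_r -> 'I_c}) (g : {ffun 'I_r -> 'I_s}) h :
  increasing f -> increasing g -> minor_ideal r A (h * minor A f g).
Proof.
move=> hf hg.
exists (fun f' g' => if (f' == f) && (g' == g) then h else 0).
rewrite (bigD1 f) //= (bigD1 g) //= !eqxx /=.
rewrite [X in _ + X]big1 ?addr0; last first.
  move=> f' /andP [_ nf]; apply: big1 => g' _.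
  by rewrite (negbTE nf) mul0r.
rewrite big1 ?addr0 //.
by move=> g' /andP [_ ng]; rewrite (negbTE ng) mul0r.
Qed.

Lemma minor_ideal_vanish (Pr : R -> Prop) g :
  (forall x y, Pr x -> Pr y -> Pr (x + y)) -> Pr 0 -> (forall x y, Pr y -> Pr (x * y)) ->
  (forall (f : {ffun 'I_r -> 'I_c}) (g : {ffun 'I_r -> 'I_s}),
     increasing f -> increasing g -> Pr (minor A f g)) ->
  minor_ideal r A g -> Pr g.
Proof.
move=> hD h0 hM hm [coef ->].
apply: (big_ind Pr) => // f hf; apply: (big_ind Pr) => // g' hg.
exact: hM (hm _ _ hf hg).
Qed.

End MinorIdeal.

Local Close Scope quotient_scope.

Lemma prod_trick (k : fieldType) (n : nat) (T : finType) (Q : T -> Prop)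
  (Id : T -> {mpoly k[n]} -> Prop) (p : 'I_n -> k) :
  (forall t, Q t -> forall g h, Id t g -> Id t (h * g)) ->
  (forall t, Q t -> exists g, Id t g /\ g.@[p] != 0) ->
  exists G, (forall t, Q t -> Id t G) /\ G.@[p] != 0.
Proof.
move=> hM hE.
have hc : forall t, exists g, Q t -> Id t g /\ g.@[p] != 0.
  move=> t; case: (classic (Q t)) => qt.
    by case: (hE t qt) => g hg; exists g.
  by exists 0.
pose h t := proj1_sig (constructive_indefinite_description _ (hc t)).
have hP t : Q t -> Id t (h t) /\ (h t).@[p] != 0.
  by rewrite /h; case: constructive_indefinite_description.
exists (\prod_(t | pb (Q t)) h t); split.
  move=> t qt; rewrite (bigD1 t) /=; last exact/pbP.
  by rewrite mulrC; apply: hM => //; case: (hP t qt).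
rewrite rmorph_prod; apply/prodf_neq0 => t /pbP qt.
by case: (hP t qt).
Qed.

Section Main.
Variables (k : fieldType) (n m d : nat) (f : 'I_m -> {mpoly k[n]})
  (P : prime_idealr {mpoly k[n]}).
Hypothesis hB0 : exists B, is_basis (alg_indep P) B /\ #|B| = d.
Hypothesis hrep : represents (frac_mx P (jacobian f)) (dual_indep (alg_indep P)).
Local Notation J := (jacobian f).
Local Notation JF := (frac_mx P (jacobian f)).
Local Notation Ind := (dual_indep (alg_indep P)).
Local Notation isB := (is_basis (alg_indep P)).
Local Notation VP := (vanishes (fun g => g \in P)).
Implicit Types S T B : {set 'I_n}.

Lemma Ind_compl B : isB B -> Ind (~: B).
Proof. by move=> hB; exists B; split. Qed.

Lemma ciF_Ind S : ci JF S <-> Ind S.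
Proof. by rewrite -ciP; apply: hrep. Qed.

Lemma compl_max B : isB B -> forall j, j \in setT -> j \notin ~: B -> ~~ ci JF (j |: ~: B).
Proof.
move=> hB j _ jB; apply/negP => /ciF_Ind [B' [hB' sub]].
have jB' : j \in B by move: jB; rewrite inE negbK.
have sB : B' \subset B :\ j.
  apply/subsetP => x xB'; rewrite !inE.
  case: (eqVneq x j) => [xj|xj /=].
    by move: (subsetP sub j); rewrite !inE eqxx /= => /(_ isT); rewrite -xj xB'.
  apply/negPn/negP => xB.
  by move: (subsetP sub x); rewrite !inE xB orbT => /(_ isT); rewrite xB'.
have pr : B' \proper B by apply: sub_proper_trans sB (properD1 jB').
by case: hB' => _ /(_ B pr); case: hB.
Qed.

Lemma rank_compl B : isB B -> #|~: B| = \rank JF.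
Proof.
move=> hB; rewrite -rank_RTT; symmetry; apply: ci_max.
- exact: subsetT.
- by apply/ciF_Ind; apply: Ind_compl.
- exact: compl_max.
Qed.

Lemma basis_card B : isB B -> #|B| = d.
Proof.
move=> hB; case: hB0 => B0 [h0 e0].
have e1 := rank_compl hB; have e2 := rank_compl h0.
rewrite -e0 (cardsCs B) (cardsCs B0) e1 e2 //.
Qed.

Lemma cardC_basis B : isB B -> #|~: B| = (n - d)%N.
Proof.
move=> hB; rewrite cardsCs setCK card_ord basis_card //.
Qed.

Lemma eval_ci_Ind p S : VP p -> ci (eval_mx J p) S -> Ind S.
Proof.
move=> hV /eqP hr.
case: (@rank_exists_minor _ _ _ (colsubset (eval_mx J p) S) #|S|); first by rewrite hr.
move=> f' [g' [hf hg hm]]; rewrite colsubset_eval minor_eval in hm.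
have nP : minor (colsubset J S) f' g' \notin P.
  by apply: contra hm => hP; rewrite (hV _ hP).
have : minor (colsubset JF S) f' g' != 0.
  by rewrite colsubset_frac minor_frac toFrac_eq0.
move/minor_rank => h; apply/ciF_Ind; by rewrite /ci eqn_leq rank_leq_col h.
Qed.

Lemma rep_iff p : VP p ->
  represents (eval_mx J p) Ind <-> (forall B, isB B -> ci (eval_mx J p) (~: B)).
Proof.
move=> hV; split.
  by move=> hr B hB; apply/ciP/hr; apply: Ind_compl.
move=> h S; split; first by move/ciP; apply: eval_ci_Ind.
by case=> B [hB sub]; apply/ciP; apply: ci_sub sub (h B hB).
Qed.

Lemma ciB_minor p B : isB B -> ci (eval_mx J p) (~: B) <->
  exists (f' : {ffun 'I_(n - d) -> 'I_m}) (g' : {ffun 'I_(n - d) -> 'I_#|~: B|}),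
    [/\ increasing f', increasing g' & (minor (colsubset J (~: B)) f' g').@[p] != 0].
Proof.
move=> hB; split.
  move/eqP => hr.
  case: (@rank_exists_minor _ _ _ (colsubset (eval_mx J p) (~: B)) (n - d)).
    by rewrite hr cardC_basis.
  move=> f' [g' [hf hg hm]]; exists f', g'; split => //.
  by rewrite -minor_eval -colsubset_eval.
move=> [f' [g' [_ _ hm]]]; rewrite -minor_eval -colsubset_eval in hm.
move/minor_rank: hm => h; rewrite /ci eqn_leq rank_leq_col /=.
apply: leq_trans _ h; by rewrite cardC_basis.
Qed.

Definition valid S := ~ (forall h, minor_ideal (n - d) (colsubset J S) h -> h \in P).

Lemma valid_minor S : valid S -> exists (f' : {ffun 'I_(n - d) -> 'I_m})
   (g' : {ffun 'I_(n - d) -> 'I_#|S|}),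
   [/\ increasing f', increasing g' & minor (colsubset J S) f' g' \notin P].
Proof.
move=> hv; apply: NNPP => hn; apply: hv => h.
apply: (@minor_ideal_vanish _ _ _ _ _ (fun x => x \in P)).
- by move=> x y hx hy; apply: rpredD.
- exact: rpred0.
- by move=> x y hy; apply: idealMr.
- move=> f' g' hf hg; apply: NNPP => hm; apply: hn; exists f', g'; split => //.
  exact/negP.
Qed.

Lemma minor_valid S (f' : {ffun 'I_(n - d) -> 'I_m}) (g' : {ffun 'I_(n - d) -> 'I_#|S|}) :
  increasing f' -> increasing g' -> minor (colsubset J S) f' g' \notin P -> valid S.
Proof.
move=> hf hg hm hv; apply: (negP hm); apply: hv.
rewrite -[minor _ _ _]mul1r; exact: minor_ideal_gen.
Qed.

Lemma validB B : isB B -> valid (~: B).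
Proof.
move=> hB; have /ciF_Ind /eqP hr := Ind_compl hB.
case: (@rank_exists_minor _ _ _ (colsubset JF (~: B)) (n - d)).
  by rewrite hr cardC_basis.
move=> f' [g' [hf hg hm]]; apply: (minor_valid hf hg).
by move: hm; rewrite colsubset_frac minor_frac toFrac_eq0.
Qed.

Definition Ipred g := forall B, isB B -> minor_ideal (n - d) (colsubset J (~: B)) g.
Definition I'pred g := forall S, valid S -> minor_ideal (n - d) (colsubset J S) g.

Lemma vanish_of_minors (r c : nat) (A : 'M[{mpoly k[n]}]_(m, c)) p g :
  (forall (f' : {ffun 'I_r -> 'I_m}) (g' : {ffun 'I_r -> 'I_c}),
     increasing f' -> increasing g' -> (minor A f' g').@[p] = 0) ->
  minor_ideal r A g -> g.@[p] = 0.
Proof.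
move=> hm; apply: (@minor_ideal_vanish _ _ _ _ _ (fun x => x.@[p] = 0)).
- by move=> x y hx hy; rewrite rmorphD /= hx hy addr0.
- exact: rmorph0.
- by move=> x y hy; rewrite rmorphM /= hy mulr0.
- exact: hm.
Qed.

Lemma bad_basis p : VP p -> ~ represents (eval_mx J p) Ind ->
  exists B, isB B /\ forall (f' : {ffun 'I_(n - d) -> 'I_m}) (g' : {ffun 'I_(n - d) -> 'I_#|~: B|}),
     increasing f' -> increasing g' -> (minor (colsubset J (~: B)) f' g').@[p] = 0.
Proof.
move=> hV hnr; apply: NNPP => hn; apply: hnr; apply/rep_iff => // B hB.
apply/(ciB_minor p hB); apply: NNPP => hm; apply: hn; exists B; split => // f' g' hf hg.
apply/eqP; apply: NNPP => hne; apply: hm; exists f', g'; split => //; exact/negP.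
Qed.

Theorem part1 p : (VP p /\ ~ represents (eval_mx J p) Ind) <-> (VP p /\ vanishes Ipred p).
Proof.
split.
  move=> [hV hnr]; split => //.
  case: (bad_basis hV hnr) => B [hB hm] g hg.
  exact: vanish_of_minors hm (hg B hB).
move=> [hV hI]; split => // hr.
have hall := (rep_iff hV).1 hr.
case: (@prod_trick k n _ isB (fun B g => minor_ideal (n - d) (colsubset J (~: B)) g) p).
- by move=> B _ g h; apply: minor_ideal_mul.
- move=> B hB; case: ((ciB_minor p hB).1 (hall B hB)) => f' [g' [hf hg hm]].
  exists (1 * minor (colsubset J (~: B)) f' g'); split; first exact: minor_ideal_gen.
  by rewrite mul1r.
move=> G [hG G0]; by move/eqP: G0; apply; apply: hI.
Qed.

Theorem part2 p : (VP p /\ ~ represents (eval_mx J p) Ind) <-> (VP p /\ vanishes I'pred p).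
Proof.
split.
  move=> [hV hnr]; split => //.
  case: (bad_basis hV hnr) => B [hB hm] g hg.
  exact: vanish_of_minors hm (hg _ (validB hB)).
move=> [hV hI]; split => // hr.
case: (@prod_trick k n _ valid (fun S g => minor_ideal (n - d) (colsubset J S) g) p).
- by move=> S _ g h; apply: minor_ideal_mul.
- move=> S hS; case: (valid_minor hS) => f' [g' [hf hg hm]].
  have : minor (colsubset JF S) f' g' != 0 by rewrite colsubset_frac minor_frac toFrac_eq0.
  move/minor_rank; rewrite -rank_RT => hrk.
  case: (ci_exists hrk) => T [TS cT eT].
  have cTp : ci (eval_mx J p) T by apply/ciP/hr/ciF_Ind.
  have : (n - d <= \rank (colsubset (eval_mx J p) S))%N.
    rewrite -rank_RT -eT; move/eqP: cTp => <-; rewrite -rank_RT.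
    exact: mxrankS (RT_sub _ TS).
  case/rank_exists_minor => f'' [g'' [hf' hg' hm']].
  exists (1 * minor (colsubset J S) f'' g''); split; first exact: minor_ideal_gen.
  by rewrite mul1r -minor_eval -colsubset_eval.
move=> G [hG G0]; by move/eqP: G0; apply; apply: hI.
Qed.

End Main.

Lemma incr_step a b (f : {ffun 'I_a -> 'I_b}) : increasing f ->
  forall kk (i j : 'I_a), val j = (i + kk)%N -> (f i + kk <= f j)%N.
Proof.
move=> hf; elim=> [|kk IH] i j e.
  rewrite addn0; have -> : j = i by apply: val_inj; rewrite e addn0.
  by [].
have hj' : (i + kk < a)%N by move: (ltn_ord j); rewrite e; lia.
have := IH i (Ordinal hj') erefl.
have := (forallP (forallP hf (Ordinal hj')) j); rewrite /= e.
rewrite addnS ltnSn /= => h1 h2; lia.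
Qed.

Lemma incr_id a (f : {ffun 'I_a -> 'I_a}) : increasing f -> forall i, val (f i) = val i.
Proof.
move=> hf i.
have h0 : (0 < a)%N by apply: leq_ltn_trans (ltn_ord i).
have l1 := @incr_step _ _ _ hf (val i) (Ordinal h0) i (esym (add0n i)).
have ha : (a.-1 < a)%N by rewrite prednK.
have hi : (i <= a.-1)%N by rewrite -ltnS prednK.
have l2 := @incr_step _ _ _ hf (a.-1 - i) i (Ordinal ha) (esym (subnKC hi)).
have l3 := ltn_ord (f (Ordinal ha)).
move: l1 l2 l3 hi; rewrite /=.
set x := val (f i); set y := val (f (Ordinal ha)); set z := val (f (Ordinal h0)).
move=> *; lia.
Qed.

Lemma incr_inj a b (c : {ffun 'I_a -> 'I_b}) : increasing c -> injective c.
Proof.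
move=> hc i j e; apply: val_inj; case: (ltngtP i j) => // h.
  by have := forallP (forallP hc i) j; rewrite h e ltnn.
by have := forallP (forallP hc j) i; rewrite h e ltnn.
Qed.

Section Image.
Variables (r n : nat) (c : {ffun 'I_r -> 'I_n}).
Hypothesis hc : increasing c.
Definition imc : {set 'I_n} := [set c i | i in 'I_r].

Lemma card_imc : #|imc| = r.
Proof. by rewrite card_imset ?card_ord //; apply: incr_inj. Qed.

Lemma enum_imc : enum imc = map c (enum 'I_r).
Proof.
apply: (@irr_sorted_eq _ (fun x y : 'I_n => (x < y)%N)).
- by move=> x y z; apply: ltn_trans.
- by move=> x; rewrite ltnn.
- exact: enum_sorted.
- rewrite sorted_map.
  have : sorted (fun x y : 'I_r => (x < y)%N) (enum 'I_r).
    by have := iota_ltn_sorted 0 r; rewrite -val_enum_ord sorted_map.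
  apply: sub_sorted => x y xy; exact: (implyP (forallP (forallP hc x) y) xy).
- move=> x; rewrite mem_enum; apply/imsetP/mapP => -[i _ ->]; exists i => //.
  by rewrite mem_enum.
Qed.

Lemma enum_val_imc (j : 'I_#|imc|) : enum_val j = c (cast_ord card_imc j).
Proof.
rewrite (enum_val_nth (enum_val j)) enum_imc.
have hj : (j < size (enum 'I_r))%N by rewrite size_enum_ord -card_imc ltn_ord.
rewrite (nth_map (cast_ord card_imc j)) //; congr (c _); apply: val_inj => /=.
by rewrite nth_enum_ord // -card_imc ltn_ord.
Qed.

End Image.

Section Part3.
Variables (k : fieldType) (n d : nat) (f : 'I_(n - d) -> {mpoly k[n]})
  (P : prime_idealr {mpoly k[n]}).
Hypothesis hB0 : exists B, is_basis (alg_indep P) B /\ #|B| = d.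
Hypothesis hrep : represents (frac_mx P (jacobian f)) (dual_indep (alg_indep P)).
Local Notation r := (n - d)%N.
Local Notation J := (jacobian f).
Local Notation JF := (frac_mx P (jacobian f)).
Local Notation Ind := (dual_indep (alg_indep P)).
Local Notation isB := (is_basis (alg_indep P)).
Implicit Types S T B : {set 'I_n}.

Definition mm (c : {ffun 'I_r -> 'I_n}) := maxminor J c.
Definition Mset (c : {ffun 'I_r -> 'I_n}) := increasing c /\ mm c \notin P.

Lemma minor_Q1 S (f' : {ffun 'I_r -> 'I_r}) (g' : {ffun 'I_r -> 'I_#|S|}) :
  increasing f' -> increasing g' ->
  minor (colsubset J S) f' g' = mm [ffun j => enum_val (g' j)] /\
  increasing [ffun j => enum_val (g' j)].
Proof.
move=> hf hg; split.
  rewrite /minor /mm /maxminor; congr (\det _); apply/matrixP => i j; rewrite !mxE ffunE.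
  by have -> : f' i = i by apply: val_inj; apply: incr_id.
apply/forallP => i; apply/forallP => j; apply/implyP => ij; rewrite !ffunE.
apply: enum_val_mono; exact: (implyP (forallP (forallP hg i) j) ij).
Qed.

Lemma minor_Q3 (c : {ffun 'I_r -> 'I_n}) (hc : increasing c)
  (f' : {ffun 'I_r -> 'I_r}) (g' : {ffun 'I_r -> 'I_#|imc c|}) :
  increasing f' -> increasing g' -> minor (colsubset J (imc c)) f' g' = mm c.
Proof.
move=> hf hg; case: (minor_Q1 hf hg) => -> _; congr (maxminor _ _).
apply/ffunP => j; rewrite ffunE enum_val_imc //; congr (c _); apply: val_inj => /=.
have hi : increasing [ffun i => cast_ord (card_imc hc) (g' i)].
  apply/forallP => i; apply/forallP => i'; apply/implyP => ii'; rewrite !ffunE /=.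
  exact: (implyP (forallP (forallP hg i) i') ii').
by have := incr_id hi j; rewrite ffunE /= => ->.
Qed.

Definition idf : {ffun 'I_r -> 'I_r} := [ffun i => i].
Lemma idf_incr : increasing idf.
Proof. by apply/forallP => i; apply/forallP => j; apply/implyP; rewrite !ffunE. Qed.
Definition idg (c : {ffun 'I_r -> 'I_n}) (hc : increasing c) : {ffun 'I_r -> 'I_#|imc c|} :=
  [ffun i => cast_ord (esym (card_imc hc)) i].
Lemma idg_incr c (hc : increasing c) : increasing (idg hc).
Proof. by apply/forallP => i; apply/forallP => j; apply/implyP; rewrite !ffunE. Qed.

Lemma dvd_of_ideal_imc (c : {ffun 'I_r -> 'I_n}) (hc : increasing c) g :
  minor_ideal r (colsubset J (imc c)) g -> rdvd (mm c) g.
Proof.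
move=> [coef ->]; exists (\sum_(f' | increasing f') \sum_(g' | increasing g') coef f' g').
rewrite mulr_suml; apply: eq_bigr => f' hf; rewrite mulr_suml; apply: eq_bigr => g' hg.
by rewrite minor_Q3.
Qed.

Lemma Mset_gen g : (forall c, Mset c -> rdvd (mm c) g) ->
  forall S, valid d f P S -> minor_ideal r (colsubset J S) g.
Proof.
move=> hg S hS; case: (valid_minor hS) => f' [g' [hf hg' hm]].
case: (minor_Q1 hf hg') => e hinc; rewrite e in hm.
case: (hg _ (conj hinc hm)) => q ->; rewrite -e; exact: minor_ideal_gen.
Qed.

Lemma Mset_valid c : Mset c -> valid d f P (imc c).
Proof.
move=> [hc hm]; apply: (minor_valid idf_incr (idg_incr hc)).
by rewrite (minor_Q3 hc idf_incr (idg_incr hc)).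
Qed.

Lemma I'_iff g : I'pred d f P g <-> (forall c, Mset c -> rdvd (mm c) g).
Proof.
split; last exact: Mset_gen.
move=> hI c hM; case: (hM) => hc _; apply: (dvd_of_ideal_imc hc); apply: hI.
exact: Mset_valid.
Qed.

Lemma I_iff g : Ipred d f P g <-> (forall c, Mset c -> rdvd (mm c) g).
Proof.
split; last first.
  by move=> h B hB; apply: Mset_gen => //; apply: (validB hB0 hrep).
move=> hI c [hc hm].
have hci : ci JF (imc c).
  have : minor (colsubset JF (imc c)) idf (idg hc) != 0.
    by rewrite colsubset_frac minor_frac toFrac_eq0 (minor_Q3 hc idf_incr (idg_incr hc)).
  move/minor_rank => h; rewrite /ci eqn_leq rank_leq_col /=.
  by apply: leq_trans h; rewrite card_imc.
have : Ind (imc c) by apply/(ciF_Ind hrep).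
case=> B [hB sub].
have eB : imc c = ~: B.
  apply/eqP; rewrite eqEcard sub /= (cardC_basis hB0 hrep hB) card_imc //.
have := hI B hB; rewrite -eB; exact: dvd_of_ideal_imc.
Qed.

End Part3.

Unset Implicit Arguments.
Set Strict Implicit.
Set Printing Implicit Defensive.

Theorem mainTheorem1 (k : fieldType) (n m d : nat)
  (f : 'I_m -> {mpoly k[n]}) (P : prime_idealr {mpoly k[n]}) :
  (* k has characteristic zero *)
  [pchar k] =i pred0 ->
  (* P = <f_1, ..., f_m> *)
  (forall g, g \in P <-> gen_ideal f g) ->
  (* d = dim V(P) = rank of the algebraic matroid M(P) *)
  (exists B, is_basis (alg_indep P) B /\ #|B| = d) ->
  (* J(P), read over Frac(k[x]/P), represents the dual of M(P) *)
  represents (frac_mx P (jacobian f)) (dual_indep (alg_indep P)) ->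
  let J := jacobian f in
  let NM := fun p : 'I_n -> k =>
      vanishes (fun g => g \in P) p /\
      ~ represents (eval_mx J p) (dual_indep (alg_indep P)) in
  let I := fun g : {mpoly k[n]} =>
      forall B, is_basis (alg_indep P) B ->
        minor_ideal (n - d) (colsubset J (~: B)) g in
  let I' := fun g : {mpoly k[n]} =>
      forall S : {set 'I_n},
        ~ (forall h, minor_ideal (n - d) (colsubset J S) h -> h \in P) ->
        minor_ideal (n - d) (colsubset J S) g in
  let is_lcm := fun h : {mpoly k[n]} =>
      (forall c : {ffun 'I_m -> 'I_n}, increasing c ->
         maxminor J c \notin P -> rdvd (maxminor J c) h) /\
      (forall q, (forall c : {ffun 'I_m -> 'I_n}, increasing c ->
         maxminor J c \notin P -> rdvd (maxminor J c) q) -> rdvd h q) in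
  (forall p, NM p <-> vanishes (fun g => g \in P) p /\ vanishes I p) /\
  (forall p, NM p <-> vanishes (fun g => g \in P) p /\ vanishes I' p) /\
  (m = (n - d)%N ->
     (exists h, is_lcm h) /\
     (forall h, is_lcm h ->
        (forall g, I g <-> rdvd h g) /\ (forall g, I' g <-> rdvd h g))).
Proof.
move=> _ _ hB0 hrep J NM I I' is_lcm.
split; first by move=> p; exact: (part1 hB0 hrep p).
split; first by move=> p; exact: (part2 hB0 hrep p).
move=> em; subst m.
have key : forall h, is_lcm h -> forall g,
    rdvd h g <-> (forall c, Mset f P c -> rdvd (mm f c) g).
  move=> h [h1 h2] g; split.
    by move=> hg c [hc hm]; apply: rdvd_trans (h1 c hc hm) hg.
  by move=> hg; apply: h2 => c hc hm; apply: hg.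
split.
  pose L := [seq mm f c | c <- enum {ffun 'I_(n - d) -> 'I_n} & increasing c && pb (mm f c \notin P)].
  have hL : forall a, a \in L -> a != 0.
    move=> a /mapP [c]; rewrite mem_filter => /andP [/andP [_ /pbP hm] _] ->.
    by apply: contraNneq hm => ->; apply: rpred0.
  case: (lcm_seq (@factorial_mpoly k n) hL) => h [_ [hL1 hL2]].
  exists h; split.
    move=> c hc hm; apply: hL1; apply/mapP; exists c => //.
    by rewrite mem_filter hc mem_enum andbT /=; apply/pbP.
  move=> q hq; apply: hL2 => a /mapP [c]; rewrite mem_filter => /andP [/andP [hc /pbP hm] _] ->.
  exact: hq.
move=> h hh; split => g.
  rewrite (key h hh g); exact: (I_iff hB0 hrep g).
rewrite (key h hh g); exact: (I'_iff f P g).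
Qed.
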